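(* Let $\rho_A,\rho_B\in\mathcal{P}(\mathcal{X})$, $h=1/N$, and let $(\rho_h,m_h)\in V^1_{n,h}\times V^0_{e,h}$ with $\mathcal{E}_h(\rho_h,m_h)\le\bar E<\infty$. Then there is a constant $\bar M<\infty$ depending only on $(\mathcal{X},Q,\pi)$ and $\bar E$ (and not on $h$) such that $\|m_h\|_{L^2([0,1],\mathbb{R}^{\mathcal{X}\times\mathcal{X}})}\le\bar M$.
   Context: Setting: $\mathcal{X}$ finite, $Q:\mathcal{X}\times\mathcal{X}\to[0,\infty)$ with $Q(x,x)=0$, irreducible, reversible with respect to its stationary distribution $\pi>0$, $\sum\pi=1$. $\mathcal{P}(\mathcal{X})=\{\rho\ge0:\sum_x\pi(x)\rho(x)=1\}$. $(\mathrm{div}_{\mathcal{X}}\Psi)(x)=\frac12\sum_yQ(x,y)(\Psi(y,x)-\Psi(x,y))$. $\theta:[0,\infty)^2\to[0,\infty)$ is continuous, concave, 1-homogeneous, symmetric, $C^\infty$ on $(0,\infty)^2$, $\theta(0,s)=\theta(s,0)=0$, $\theta(s,s)=s$, $\theta>0$ on $(0,\infty)^2$, nondecreasing in each argument; $\theta=-\infty$ if an argument is negative. $\alpha(s,t,m)=m^2/\theta(s,t)$ if $\theta(s,t)>0$, $0$ if $\theta(s,t)=0=m$, $+\infty$ otherwise. Time discretization: $h=1/N$, $t_i=ih$, $I_i=[t_i,t_{i+1})$; $V^1_{n,h}$: continuous functions $[0,1]\to\mathbb{R}^{\mathcal{X}}$ affine on each $I_i$; $V^0_{e,h}$: functions $[0,1]\to\mathbb{R}^{\mathcal{X}\times\mathcal{X}}$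 constant on each $I_i$ (value $m(t_i)$). $\mathcal{CE}_h(\rho_A,\rho_B)$: $(\rho_h,m_h)\in V^1_{n,h}\times V^0_{e,h}$ with $\rho_h(t_0)=\rho_A$, $\rho_h(t_N)=\rho_B$ and $(\rho_h(t_{i+1})-\rho_h(t_i))/h+\mathrm{div}_{\mathcal{X}}m_h(t_i)=0$ for $i=0,\dots,N-1$. For $\rho_h\in V^1_{n,h}$, $(\mathrm{avg}_h\rho_h)(t_i)=\frac12(\rho_h(t_i)+\rho_h(t_{i+1}))$. $\mathcal{A}_h(\rho_h,m_h)=\frac h2\sum_{i=0}^{N-1}\sum_{x,y}\alpha((\mathrm{avg}_h\rho_h)(t_i,x),(\mathrm{avg}_h\rho_h)(t_i,y),m_h(t_i,x,y))Q(x,y)\pi(x)$, and $\mathcal{E}_h(\rho_h,m_h)=\mathcal{A}_h(\rho_h,m_h)$ if $(\rho_h,m_h)\in\mathcal{CE}_h(\rho_A,\rho_B)$ and $+\infty$ otherwise. *)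

(* Defs.v *)
From HB Require Import structures.
From mathcomp Require Import all_boot all_order all_algebra.
From mathcomp Require Import all_classical all_reals all_analysis.
Set Implicit Arguments. Unset Strict Implicit. Unset Printing Implicit Defensive.
Import Order.TTheory GRing.Theory Num.Theory.
Import numFieldNormedType.Exports.
Local Open Scope classical_set_scope.
Local Open Scope ring_scope.

Section Defs.
Variable R : realType.

Definition Qrel (T : finType) (Q : T -> T -> R) : rel T := fun a b => 0 < Q a b.

Definition markov_setting (T : finType) (Q : T -> T -> R) (pi : T -> R) : Prop :=
  [/\ (forall x y, 0 <= Q x y) /\ (forall x, Q x x = 0),
      (forall x y, connect (Qrel Q) x y),
      ((forall x, 0 < pi x) /\ (\sum_(x : T) pi x) = 1),
      (forall y, (\sum_(x : T) pi x * Q x y) = pi y * \sum_(z : T) Q y z)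
    & (forall x y, pi x * Q x y = pi y * Q y x)].

Definition prob_density (T : finType) (pi : T -> R) (rho : T -> R) : Prop :=
  (forall x, 0 <= rho x) /\ \sum_x pi x * rho x = 1.

Definition divX (T : finType) (Q : T -> T -> R) (Psi : T -> T -> R) (x : T) : R :=
  2^-1 * \sum_y Q x y * (Psi y x - Psi x y).

Definition pdiff (b : bool) (f : R -> R -> R) : R -> R -> R :=
  if b then fun s t => derive1 (fun u => f u t) s
  else fun s t => derive1 (fun u => f s u) t.

Fixpoint iter_pd (l : seq bool) (f : R -> R -> R) : R -> R -> R :=
  if l is b :: l' then pdiff b (iter_pd l' f) else f.

Definition smooth_on_pos_quadrant (f : R -> R -> R) : Prop :=
  forall (l : seq bool) (s t : R), 0 < s -> 0 < t ->
    [/\ derivable (fun u => iter_pd l f u t) s 1,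
        derivable (fun u => iter_pd l f s u) t 1
      & {for (s, t), continuous (fun p : R * R => iter_pd l f p.1 p.2)}].

(* theta : [0,oo)^2 -> [0,oo) (values at negative arguments are irrelevant:
   they are treated as -oo inside [alpha] below). *)
Definition admissible_theta (theta : R -> R -> R) : Prop :=
  [/\ [/\ (forall s t, 0 <= s -> 0 <= t -> 0 <= theta s t),
      {within [set p : R * R | 0 <= p.1 /\ 0 <= p.2],
         continuous (fun p : R * R => theta p.1 p.2)},
      (forall (a s1 t1 s2 t2 : R), 0 <= a <= 1 -> 0 <= s1 -> 0 <= t1 ->
          0 <= s2 -> 0 <= t2 ->
          a * theta s1 t1 + (1 - a) * theta s2 t2
            <= theta (a * s1 + (1 - a) * s2) (a * t1 + (1 - a) * t2))
    & (forall (l s t : R), 0 <= l -> 0 <= s -> 0 <= t ->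
          theta (l * s) (l * t) = l * theta s t)],
      (forall s t, 0 <= s -> 0 <= t -> theta s t = theta t s),
      smooth_on_pos_quadrant theta &
   [/\ (forall s, 0 <= s -> theta 0 s = 0 /\ theta s 0 = 0),
       (forall s, 0 <= s -> theta s s = s),
       (forall s t, 0 < s -> 0 < t -> 0 < theta s t)
     & (forall s s' t, 0 <= s -> s <= s' -> 0 <= t ->
          theta s t <= theta s' t /\ theta t s <= theta t s')]].

(* alpha(s,t,m) = m^2/theta(s,t) if theta(s,t) > 0, 0 if theta(s,t) = 0 = m,
   +oo otherwise; theta = -oo when an argument is negative. *)
Definition alpha (theta : R -> R -> R) (s t m : R) : \bar R :=
  if (0 <= s) && (0 <= t) then
    if 0 < theta s t then ((m ^+ 2) / theta s t)%:E
    else if (theta s t == 0) && (m == 0) then 0%E else +oo%E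
  else +oo%E.

(* ---------- Time discretisation, h = 1/N ----------
   rho_h in V^1_{n,h} is represented by its nodal values rho i = rho_h(t_i),
   i = 0..N (it is affine in between); m_h in V^0_{e,h} by its values
   m i = m_h(t_i), i = 0..N-1 (it is constant on I_i = [t_i,t_{i+1})).
   Values at other indices are irrelevant. *)

Definition hstep (N : nat) : R := N%:R^-1.

Definition CE_h (T : finType) (Q : T -> T -> R) (N : nat)
    (rhoA rhoB : T -> R) (rho : nat -> T -> R) (m : nat -> T -> T -> R) : Prop :=
  [/\ rho 0%N = rhoA, rho N = rhoB &
      forall i : nat, (i < N)%N -> forall x,
        (rho i.+1 x - rho i x) / hstep N + divX Q (m i) x = 0].

Definition avg_h (T : finType) (rho : nat -> T -> R) (i : nat) (x : T) : R :=
  2^-1 * (rho i x + rho i.+1 x).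

Definition action_h (T : finType) (Q : T -> T -> R) (pi : T -> R)
    (theta : R -> R -> R) (N : nat)
    (rho : nat -> T -> R) (m : nat -> T -> T -> R) : \bar R :=
  ((hstep N / 2)%:E *
    \sum_(i < N) \sum_x \sum_y
       (alpha theta (avg_h rho i x) (avg_h rho i y) (m i x y) *
        (Q x y * pi x)%:E))%E.

Definition energy_h (T : finType) (Q : T -> T -> R) (pi : T -> R)
    (theta : R -> R -> R) (N : nat) (rhoA rhoB : T -> R)
    (rho : nat -> T -> R) (m : nat -> T -> T -> R) : \bar R :=
  if `[< CE_h Q N rhoA rhoB rho m >] then action_h Q pi theta N rho m
  else +oo%E.

Definition sqnorm_e (T : finType) (Q : T -> T -> R) (pi : T -> R)
    (Psi : T -> T -> R) : R :=
  2^-1 * \sum_x \sum_y Psi x y ^+ 2 * Q x y * pi x.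

(* L^2([0,1], R^{X x X}) norm of the piecewise constant m_h:
   int_0^1 ||m_h(t)||^2 dt = sum_i h ||m_h(t_i)||^2. *)
Definition L2norm_e (T : finType) (Q : T -> T -> R) (pi : T -> R) (N : nat)
    (m : nat -> T -> T -> R) : R :=
  Num.sqrt (\sum_(i < N) hstep N * sqnorm_e Q pi (m i)).

End Defs.

(* Main.v *)
Require Import Defs.
From HB Require Import structures.
From mathcomp Require Import all_boot all_order all_algebra.
From mathcomp Require Import all_classical all_reals all_analysis.
From mathcomp Require Import ring lra.
Import Order.TTheory GRing.Theory Num.Theory.
Local Open Scope ring_scope.

Set Implicit Arguments.
Section Aux.
Context {R : realType}.

Lemma eterm_le {I : finType} (F : I -> \bar R) j :
  (forall i, (0 <= F i)%E) -> (F j <= \sum_i F i)%E.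
Proof. by move=> H; rewrite (bigD1 j) //=; apply: leeDl; exact: sume_ge0. Qed.

Lemma rterm_le {I : finType} (F : I -> R) j :
  (forall i, 0 <= F i) -> F j <= \sum_i F i.
Proof. by move=> H; rewrite (bigD1 j) //= lerDl sumr_ge0. Qed.

Lemma div_sum0 {T : finType} (Q : T -> T -> R) (pi : T -> R)
  (rev : forall x y, pi x * Q x y = pi y * Q y x) Psi :
  \sum_x pi x * divX Q Psi x = 0.
Proof.
rewrite /divX.
rewrite (eq_bigr (fun x => 2^-1 * (\sum_y pi x * Q x y * Psi y x
                                  - \sum_y pi x * Q x y * Psi x y))); last first.
  move=> x _; rewrite mulrCA; congr (_ * _); rewrite mulr_sumr -sumrB.
  by apply: eq_bigr => y _; ring.
rewrite -mulr_sumr sumrB.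
have -> : \sum_x \sum_y pi x * Q x y * Psi y x = \sum_x \sum_y pi x * Q x y * Psi x y.
  rewrite exchange_big /=; apply: eq_bigr => y _; apply: eq_bigr => x _.
  by rewrite rev.
by rewrite subrr mulr0.
Qed.

Lemma alpha_ge0 (theta : R -> R -> R) (s t m : R) : (0 <= alpha theta s t m)%E.
Proof.
rewrite /alpha; case: ifP => // _; case: ifP => [h|_].
  by rewrite lee_fin divr_ge0 // ?sqr_ge0 // ltW.
by case: ifP.
Qed.

Lemma alpha_fin (theta : R -> R -> R) (s t m : R) : alpha theta s t m != +oo%E ->
  [/\ 0 <= s, 0 <= t & exists v, [/\ alpha theta s t m = v%:E, 0 <= v &
      m ^+ 2 <= v * theta s t]].
Proof.
rewrite /alpha; case: ifP; last by rewrite eqxx.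
move=> /andP[s0 t0]; case: ifP => [h|_] H.
  split => //; exists (m ^+ 2 / theta s t); split => //.
    by rewrite divr_ge0 // ?sqr_ge0 // ltW.
  by rewrite divfK // gt_eqF.
move: H; case: ifP; last by rewrite eqxx.
move=> /andP[/eqP th /eqP ->] _; split => //; exists 0; split => //.
by rewrite expr0n /= mul0r.
Qed.

End Aux.

Theorem lemma3p7 (R : realType) (T : finType) (Q : T -> T -> R) (pi : T -> R) :
  markov_setting Q pi ->
  forall Ebar : R, exists Mbar : R,
  forall theta : R -> R -> R, admissible_theta theta ->
  forall N : nat, (0 < N)%N ->
  forall rhoA rhoB : T -> R, prob_density pi rhoA -> prob_density pi rhoB ->
  forall (rho : nat -> T -> R) (m : nat -> T -> T -> R),
    (energy_h Q pi theta N rhoA rhoB rho m <= Ebar%:E)%E ->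
    L2norm_e Q pi N m <= Mbar.
Proof.
move=> [[Q0 Qxx] _ [pipos pisum] _ rev] Ebar.
set C := \sum_x (pi x)^-1.
have C0 : 0 <= C by apply: sumr_ge0 => x _; rewrite invr_ge0 ltW.
exists (Num.sqrt (C * Num.max Ebar 0)).
move=> theta [[th0 _ _ _] _ _ [_ thss _ thmono]] N N0 rhoA rhoB [rA0 rA1] _ rho m.
rewrite /energy_h; case: asboolP => [[eA eB ce] | _]; last by rewrite leye_eq.
move=> Hact.
have hpos : 0 < hstep R N by rewrite /hstep invr_gt0 ltr0n.
have step : forall i, (i < N)%N -> forall x,
    rho i.+1 x = rho i x - hstep R N * divX Q (m i) x.
  move=> i Hi x; apply/eqP; rewrite -subr_eq0.
  have -> : rho i.+1 x - (rho i x - hstep R N * divX Q (m i) x)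
      = ((rho i.+1 x - rho i x) / hstep R N + divX Q (m i) x) * hstep R N.
    by field; rewrite gt_eqF.
  by rewrite ce // mul0r.
have mass : forall i, (i <= N)%N -> \sum_x pi x * rho i x = 1.
  elim=> [|i IH] Hi; first by rewrite eA.
  rewrite -(IH (ltnW Hi)).
  rewrite (eq_bigr (fun x => pi x * rho i x - hstep R N * (pi x * divX Q (m i) x)));
    last by move=> x _; rewrite step //; ring.
  by rewrite sumrB -mulr_sumr div_sum0 // mulr0 subr0.
have iso : forall z, (forall y, Q z y = 0) -> forall i, (i <= N)%N -> rho i z = rhoA z.
  move=> z Hz; elim=> [|i IH] Hi; first by rewrite eA.
  rewrite step // -(IH (ltnW Hi)) /divX big1 ?mulr0 ?subr0 // => y _.
  by rewrite Hz mul0r.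
set term := fun (i : 'I_N) x y => (alpha theta (avg_h rho i x) (avg_h rho i y) (m i x y)
   * (Q x y * pi x)%:E)%E.
have tge0 : forall i x y, (0 <= term i x y)%E.
  by move=> i x y; apply: mule_ge0; rewrite ?alpha_ge0 // lee_fin mulr_ge0 // ltW.
have tfin : forall i x y, term i x y != +oo%E.
  move=> i x y; apply/negP => /eqP Ht.
  move: Hact; rewrite /action_h.
  have -> : (\sum_(i < N) \sum_x \sum_y
       (alpha theta (avg_h rho i x) (avg_h rho i y) (m i x y) * (Q x y * pi x)%:E))%E
        = +oo%E.
    apply/eqP; rewrite -leye_eq -Ht.
    have h1 := eterm_le (fun b => term i x b) y (tge0 i x).
    have h2 := eterm_le (fun a => \sum_b term i a b) x
      (fun a => sume_ge0 (fun b _ => tge0 i a b) _).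
    have h3 := eterm_le (fun j => \sum_a \sum_b term j a b) i
      (fun j => sume_ge0 (fun a _ => sume_ge0 (fun b _ => tge0 j a b) _) _).
    exact: (le_trans h1 (le_trans h2 h3)).
  by rewrite mulry gtr0_sg ?mul1e ?divr_gt0 // leye_eq.
have edge : forall (i : 'I_N) x y, 0 < Q x y ->
    [/\ 0 <= avg_h rho i x, 0 <= avg_h rho i y & exists v,
      [/\ alpha theta (avg_h rho i x) (avg_h rho i y) (m i x y) = v%:E, 0 <= v &
      m i x y ^+ 2 <= v * theta (avg_h rho i x) (avg_h rho i y)]].
  move=> i x y Hq; apply: alpha_fin; apply/negP => /eqP Ha.
  by move: (tfin i x y); rewrite /term Ha gt0_mulye // lte_fin mulr_gt0.
have avg0 : forall (i : 'I_N) z, 0 <= avg_h rho i z.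
  move=> i z; case: (pselect (exists w, 0 < Q z w)) => [[w Hw]|Hn].
    by case: (edge i z w Hw).
  have Hz : forall y, Q z y = 0.
    move=> y; apply/eqP; rewrite eq_le Q0 andbT leNgt; apply/negP => H.
    by apply: Hn; exists y.
  rewrite /avg_h !iso // ?(ltnW (ltn_ord i)) //.
  by rewrite mulr_ge0 // addr_ge0.
have avgC : forall (i : 'I_N) z, avg_h rho i z <= C.
  move=> i z.
  have s1 : \sum_x pi x * avg_h rho i x = 1.
    rewrite (eq_bigr (fun x => 2^-1 * (pi x * rho i x + pi x * rho i.+1 x)));
      last by move=> x _; rewrite /avg_h; ring.
    rewrite -mulr_sumr big_split /= !mass ?(ltnW (ltn_ord i)) //.
    by rewrite -mulr2n -mulr_natr mulVf.
  have h1 : pi z * avg_h rho i z <= 1.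
    rewrite -s1; apply: (rterm_le (fun x => pi x * avg_h rho i x)) => x.
    by rewrite mulr_ge0 // ltW.
  apply: (le_trans _ (rterm_le (fun x => (pi x)^-1) z _)); last first.
    by move=> x; rewrite invr_ge0 ltW.
  have -> : avg_h rho i z = (pi z)^-1 * (pi z * avg_h rho i z)
    by rewrite mulrA mulVf ?mul1r // gt_eqF.
  by rewrite -[leRHS]mulr1 ler_wpM2l // invr_ge0 ltW.
have thC : forall a b, 0 <= a <= C -> 0 <= b <= C -> theta a b <= C.
  move=> a b /andP[a0 aC] /andP[b0 bC].
  apply: (le_trans (thmono a C b a0 aC b0).1).
  by apply: (le_trans (thmono b C C b0 bC C0).2); rewrite thss.
set a := fun i x y => fine (term i x y).
have ta : forall i x y, term i x y = (a i x y)%:E.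
  move=> i x y; rewrite /a fineK // fin_numE tfin andbT.
  by apply: contraTneq (tge0 i x y) => ->.
have a0 : forall i x y, 0 <= a i x y by move=> i x y; rewrite -lee_fin -ta.
have key : forall (i : 'I_N) x y, m i x y ^+ 2 * Q x y * pi x <= C * a i x y.
  move=> i x y; have [Hq|Hq] := ltP 0 (Q x y); last first.
    have -> : Q x y = 0 by apply/eqP; rewrite eq_le Hq Q0.
    by rewrite mulr0 mul0r mulr_ge0.
  case: (edge i x y Hq) => ax ay [v [hv v0 hm]].
  have : (a i x y)%:E = (v * (Q x y * pi x))%:E by rewrite -ta /term hv.
  move=> [->].
  have hth : theta (avg_h rho i x) (avg_h rho i y) <= C by apply: thC; rewrite ?ax ?ay ?avgC.
  rewrite !mulrA; apply: ler_wpM2r; first exact: ltW. apply: ler_wpM2r; first exact: ltW.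
  idtac.
  apply: (le_trans hm); rewrite mulrC; apply: ler_wpM2r => //.
have Hsum : hstep R N / 2 * (\sum_(i < N) \sum_x \sum_y a i x y) <= Ebar.
  rewrite -lee_fin; apply: le_trans Hact; rewrite /action_h EFinM lee_pmul2l //.
    rewrite -!sumEFin le_eqVlt; apply/orP; left; apply/eqP.
    apply: eq_bigr => i _; rewrite -sumEFin; apply: eq_bigr => x _.
    rewrite -sumEFin; apply: eq_bigr => y _; by rewrite -ta.
  by rewrite lte_fin divr_gt0.
rewrite /L2norm_e ler_sqrt; last by rewrite mulr_ge0 // le_max lexx orbT.
have E1 : \sum_(i < N) hstep R N * sqnorm_e Q pi (m i)
    = hstep R N / 2 * \sum_(i < N) \sum_x \sum_y m i x y ^+ 2 * Q x y * pi x.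
  by rewrite mulr_sumr; apply: eq_bigr => i _; rewrite /sqnorm_e mulrA.
rewrite E1.
apply: (@le_trans _ _ (hstep R N / 2 * \sum_(i < N) \sum_x \sum_y C * a i x y)).
  apply: ler_wpM2l; first by rewrite divr_ge0 // ltW.
  apply: ler_sum => i _; apply: ler_sum => x _; apply: ler_sum => y _; exact: key.
have -> : \sum_(i < N) \sum_x \sum_y C * a i x y = C * \sum_(i < N) \sum_x \sum_y a i x y.
  rewrite mulr_sumr; apply: eq_bigr => i _; rewrite mulr_sumr; apply: eq_bigr => x _.
  by rewrite mulr_sumr.
rewrite mulrCA; apply: ler_wpM2l => //; apply: (le_trans Hsum).
by rewrite le_max lexx.
Qed.
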